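(* Let $K:X\times X\to\mathbb{C}$ be positive definite and assume $\delta_x\in\mathscr{H}(K)$ for all $x\in X$. Then a function $h$ on $X$ belongs to $\mathscr{H}(K)$ if and only if $\sup_F\|K_F^{-1/2}h_F\|_{\ell^2(F)}<\infty$, the supremum over all finite subsets $F\subset X$, where $h_F=h|_F$ and $K_F=(K(x,y))_{x,y\in F}$. If $h\in\mathscr{H}(K)$, then $\|h\|^2_{\mathscr{H}(K)}=\sup_F\|K_F^{-1/2}h_F\|^2_{\ell^2(F)}$.
   Context: $\delta_x$ is the function on $X$ equal to $1$ at $x$ and $0$ elsewhere; $\mathscr{H}(K)$ is the reproducing kernel Hilbert space of $K$ (completion of span of $K(\cdot,x)$, $\langle K(\cdot,x),K(\cdot,y)\rangle=K(x,y)$, $\langle K(\cdot,x),h\rangle=h(x)$). Under the assumption, each $K_F$ is a positive invertible matrix and $K_F^{-1/2}$ is defined by the spectral theorem. *)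

(* Defs.v *)
From mathcomp Require Import all_boot all_algebra.
From mathcomp Require Import all_classical all_reals.
From mathcomp Require Export complex.
From Stdlib Require List.
Set Implicit Arguments. Unset Strict Implicit. Unset Printing Implicit Defensive.
Import GRing.Theory Num.Theory.
Local Open Scope ring_scope.

Section RKHS.
Variables (R : realType) (X : Type).

(* An element of the pre-Hilbert space H_0 = span{K(.,x)} is represented by a
   finite list of pairs (x_i, c_i), standing for sum_i c_i K(., x_i). *)
Definition kfun (K : X -> X -> R[i]) (p : seq (X * R[i])%type) : X -> R[i] :=
  fun y => \sum_(q <- p) q.2 * K y q.1.

(* ||sum_i c_i K(.,x_i)||^2 = sum_{i,j} conj(c_i) c_j K(x_i,x_j) *)
Definition kform (K : X -> X -> R[i]) (p : seq (X * R[i])%type) : R[i] :=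
  \sum_(a <- p) \sum_(b <- p) Num.conj a.2 * b.2 * K a.1 b.1.

Definition knorm2 (K : X -> X -> R[i]) (p : seq (X * R[i])%type) : R :=
  complex.Re (kform K p).

Definition kdiff (p q : seq (X * R[i])%type) : seq (X * R[i])%type :=
  p ++ [seq (a.1, - a.2) | a <- q].

(* K positive definite: sum_{i,j} conj(c_i) c_j K(x_i,x_j) >= 0 for all finite
   families (in R[i], 0 <= z means z is real and nonnegative). *)
Definition pos_def (K : X -> X -> R[i]) : Prop :=
  forall p : seq (X * R[i])%type, 0 <= kform K p.

(* u is a Cauchy sequence in H_0 (for the norm of H_0) converging pointwise to h:
   this realizes the completion of H_0 as a space of functions on X. *)
Definition approximates (K : X -> X -> R[i]) (h : X -> R[i])
    (u : nat -> seq (X * R[i])%type) : Prop :=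
  (forall e : R, 0 < e -> exists N : nat, forall m n : nat,
      (N <= m)%N -> (N <= n)%N -> knorm2 K (kdiff (u m) (u n)) < e) /\
  (forall (x : X) (e : R), 0 < e -> exists N : nat, forall n : nat,
      (N <= n)%N -> `|kfun K (u n) x - h x| < e%:C%C).

Definition inH (K : X -> X -> R[i]) (h : X -> R[i]) : Prop :=
  exists u, approximates K h u.

Definition rkhs_norm2 (K : X -> X -> R[i]) (h : X -> R[i]) (v : R) : Prop :=
  forall u, approximates K h u ->
  forall e : R, 0 < e -> exists N : nat, forall n : nat,
      (N <= n)%N -> `|knorm2 K (u n) - v| < e.

Definition delta (x : X) : X -> R[i] :=
  fun y => if pselect (y = x) then 1 else 0.

(* For a finite subset F given by a duplicate-free list xs: K_F and h_F *)
Definition Kmx (K : X -> X -> R[i]) (xs : seq X) : 'M[R[i]]_(size xs) :=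
  \matrix_(i, j) K (tnth (in_tuple xs) i) (tnth (in_tuple xs) j).

Definition hcol (h : X -> R[i]) (xs : seq X) : 'cV[R[i]]_(size xs) :=
  \col_i h (tnth (in_tuple xs) i).

End RKHS.

Definition adjmx (R : realType) m n (M : 'M[R[i]]_(m, n)) : 'M[R[i]]_(n, m) :=
  map_mx Num.conj M^T.

Definition psd_mx (R : realType) n (S : 'M[R[i]]_n) : Prop :=
  S = adjmx S /\ forall v : 'cV[R[i]]_n, 0 <= (adjmx v *m S *m v) 0 0.

Definition inv_sqrt_mx (R : realType) n (M : 'M[R[i]]_n) : 'M[R[i]]_n :=
  xget 0 [set S | psd_mx S /\ S *m S = invmx M].

Definition l2norm2 (R : realType) n (v : 'cV[R[i]]_n) : R :=
  \sum_i complex.Re (Num.conj (v i 0) * v i 0).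

Definition Qform (R : realType) (X : Type) (K : X -> X -> R[i]) (h : X -> R[i])
    (xs : seq X) : R :=
  l2norm2 (inv_sqrt_mx (Kmx K xs) *m hcol h xs).

Arguments delta {R X} x _.

(* Main.v *)
Require Import Defs.
From mathcomp Require Import all_boot all_algebra all_classical all_reals complex.
From mathcomp Require Import all_order spectral sesquilinear.
From mathcomp Require Import ring lra.
From Stdlib Require List.
Import Order.TTheory GRing.Theory Num.Theory.
Local Open Scope complex_scope.
Local Open Scope ring_scope.

Section Sqrt.
Variable (R : realType).
Local Notation C := R[i].

Lemma adjmxE m n (M : 'M[C]_(m, n)) : adjmx M = (M ^t* )%sesqui.
Proof. by []. Qed.

Lemma adjmxM m n p (M : 'M[C]_(m, n)) (N : 'M[C]_(n, p)) :
  adjmx (M *m N) = adjmx N *m adjmx M.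
Proof. by rewrite /adjmx trmx_mul map_mxM. Qed.
Lemma adjmxK m n (M : 'M[C]_(m, n)) : adjmx (adjmx M) = M.
Proof. exact: trmxCK. Qed.

Lemma psd_diag n (e : 'rV[C]_n) (w : 'cV[C]_n) : (forall i, 0 <= e 0 i) ->
  0 <= (adjmx w *m diag_mx e *m w) 0 0.
Proof.
move=> e0; rewrite mul_mx_diag !mxE; apply: sumr_ge0 => j _; rewrite !mxE.
  have -> : (w j 0)^* * e 0 j * w j 0 = e 0 j * (w j 0 * (w j 0)^*) by ring.
  exact: mulr_ge0 (e0 j) (mul_conjC_ge0 _).
Qed.

Lemma adjmx_delta n i : adjmx (delta_mx i 0 : 'cV[C]_n) = delta_mx 0 i.
Proof. by rewrite /adjmx trmx_delta map_delta_mx. Qed.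

Lemma sqrt_psd n (M : 'M[C]_n) : adjmx M = M ->
  (forall v : 'cV[C]_n, 0 <= (adjmx v *m M *m v) 0 0) -> exists S : 'M[C]_n, psd_mx S /\ S *m S = M.
Proof.
move=> HM Mpos.
have Mn : M \is normalmx by apply/normalmxP; rewrite -adjmxE HM.
have /orthomx_spectralP HMe := Mn.
set P := spectralmx M in HMe; set d := spectral_diag M in HMe.
have PU : P \is unitarymx by apply: spectral_unitarymx.
have PP : P *m adjmx P = 1%:M by apply/unitarymxP.
have iP : invmx P = adjmx P by rewrite invmx_unitary.
have Pu : P \in unitmx by apply: unitarymx_unit.
have PP' : adjmx P *m P = 1%:M by rewrite -iP mulVmx.
rewrite iP in HMe.
have dge : forall i, 0 <= d 0 i.
  move=> i; have := Mpos (adjmx P *m delta_mx i 0).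
  have key : P *m M *m adjmx P = diag_mx d.
    by rewrite HMe !mulmxA PP mul1mx -mulmxA PP mulmx1.
  rewrite adjmxM adjmxK adjmx_delta.
  have -> : (delta_mx 0 i : 'rV[C]_n) *m P *m M *m (adjmx P *m delta_mx i 0) =
            delta_mx 0 i *m (P *m M *m adjmx P) *m (delta_mx i 0 : 'cV[C]_n).
    by rewrite !mulmxA.
  by rewrite key -rowE -colE !mxE eqxx mulr1n.
set s := \row_i sqrtC (d 0 i).
have ss : diag_mx s *m diag_mx s = diag_mx d.
  rewrite mulmx_diag; congr diag_mx; apply/rowP => i; rewrite !mxE -expr2 sqrtCK.
  by [].
have sadj : adjmx (diag_mx s) = diag_mx s.
  rewrite /adjmx tr_diag_mx map_diag_mx; congr diag_mx; apply/rowP => i.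
  by rewrite !mxE; apply: conj_Creal; rewrite ger0_real // sqrtC_ge0.
exists (adjmx P *m diag_mx s *m P); split; last first.
  by rewrite HMe -!mulmxA (mulmxA P) PP mul1mx !mulmxA -(mulmxA (adjmx P)) ss.
split.
  by rewrite !adjmxM adjmxK sadj mulmxA.
move=> v; rewrite -!mulmxA !mulmxA -adjmxM -mulmxA.
by apply: psd_diag => i; rewrite mxE sqrtC_ge0.
Qed.

End Sqrt.

Section H0.
Variables (R : realType) (X : Type) (K : X -> X -> R[i]).
Local Notation C := R[i].
Local Notation L := (seq (X * C)%type).

Definition ip (p q : L) : C :=
  \sum_(a <- p) \sum_(b <- q) Num.conj a.2 * b.2 * K a.1 b.1.
Definition neg (p : L) : L := [seq (a.1, - a.2) | a <- p].
Definition sc (c : C) (p : L) : L := [seq (a.1, c * a.2) | a <- p].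

Lemma kformE p : kform K p = ip p p. Proof. by []. Qed.

Lemma ip_catl p1 p2 q : ip (p1 ++ p2) q = ip p1 q + ip p2 q.
Proof. by rewrite /ip big_cat. Qed.
Lemma ip_catr p q1 q2 : ip p (q1 ++ q2) = ip p q1 + ip p q2.
Proof. by rewrite /ip -big_split; apply: eq_bigr => a _; rewrite big_cat. Qed.
Lemma ip_negl p q : ip (neg p) q = - ip p q.
Proof.
rewrite /ip big_map -sumrN; apply: eq_bigr => a _; rewrite -sumrN.
by apply: eq_bigr => b _; rewrite rmorphN /= !mulNr.
Qed.
Lemma ip_negr p q : ip p (neg q) = - ip p q.
Proof.
rewrite /ip -sumrN; apply: eq_bigr => a _; rewrite big_map -sumrN.
by apply: eq_bigr => b _ /=; rewrite mulrN mulNr.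
Qed.
Lemma ip_scl c p q : ip (sc c p) q = Num.conj c * ip p q.
Proof.
rewrite /ip big_map mulr_sumr; apply: eq_bigr => a _; rewrite mulr_sumr.
by apply: eq_bigr => b _ /=; rewrite rmorphM /= !mulrA.
Qed.
Lemma ip_scr c p q : ip p (sc c q) = c * ip p q.
Proof.
rewrite /ip mulr_sumr; apply: eq_bigr => a _; rewrite big_map mulr_sumr.
by apply: eq_bigr => b _ /=; rewrite !mulrA [_ * c]mulrC.
Qed.

Lemma ip_kfun p q : ip p q = \sum_(a <- p) Num.conj a.2 * kfun K q a.1.
Proof.
apply: eq_bigr => a _; rewrite /kfun mulr_sumr.
by apply: eq_bigr => b _; rewrite mulrA.
Qed.

Lemma kfun_cat p q y : kfun K (p ++ q) y = kfun K p y + kfun K q y.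
Proof. by rewrite /kfun big_cat. Qed.
Lemma kfun_neg p y : kfun K (neg p) y = - kfun K p y.
Proof. by rewrite /kfun big_map -sumrN; apply: eq_bigr => a _ /=; rewrite mulNr. Qed.
Lemma kfun_sc c p y : kfun K (sc c p) y = c * kfun K p y.
Proof. by rewrite /kfun big_map mulr_sumr; apply: eq_bigr => a _ /=; rewrite mulrA. Qed.
Lemma kfun_kdiff p q y : kfun K (kdiff p q) y = kfun K p y - kfun K q y.
Proof. by rewrite /kdiff kfun_cat kfun_neg. Qed.

Lemma ip_ext r p q : (forall y, kfun K p y = kfun K q y) -> ip r p = ip r q.
Proof. by move=> e; rewrite !ip_kfun; apply: eq_bigr => a _; rewrite e. Qed.

Hypothesis Kpos : pos_def K.

Lemma Kherm x y : K y x = Num.conj (K x y).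
Proof.
have two a b : kform K [:: (x, a); (y, b)] =
   Num.conj a * a * K x x + Num.conj a * b * K x y +
   (Num.conj b * a * K y x + Num.conj b * b * K y y).
  by rewrite /kform !big_cons !big_nil /= !addr0.
have rl a b : Num.conj (kform K [:: (x, a); (y, b)]) = kform K [:: (x, a); (y, b)].
  by apply: conj_Creal; apply: ger0_real; apply: Kpos.
have S := (rmorph0, rmorph1, mul0r, mulr0, mul1r, mulr1, add0r, addr0).
have rxx : Num.conj (K x x) = K x x.
  by have := rl 1 0; rewrite two !S.
have ryy : Num.conj (K y y) = K y y.
  by have := rl 0 1; rewrite two !S.
have h1 := rl 1 1; rewrite two !S in h1.
have h2 := rl 1 'i; rewrite two !S in h2.
rewrite !rmorphD !rmorphM /= ?conjCK rxx ryy ?conjCi in h1 h2.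
set u := K x y in h1 h2 *; set v := K y x in h1 h2 *.
have E1 : u^* + v^* = u + v.
  by move/eqP: h1; rewrite -subr_eq0 => /eqP h1; apply/eqP; rewrite -subr_eq0 -h1; apply/eqP; ring.
have E2 : 'i * (v^* - u^*) = 'i * (u - v).
  by move/eqP: h2; rewrite -subr_eq0 => /eqP h2; apply/eqP; rewrite -subr_eq0 -h2; apply/eqP; ring.
move/(mulfI (neq0Ci _)): E2 => E2.
have E3 : 2 * v^* = 2 * u.
  have -> : 2 * v^* = (u^* + v^*) + (v^* - u^*) by ring.
  rewrite E1 E2; ring.
have two0 : (2:C) != 0 by rewrite pnatr_eq0.
move/(mulfI two0): E3 => E3.
by rewrite -E3 conjCK.
Qed.

Lemma ip_conj p q : ip q p = Num.conj (ip p q).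
Proof.
rewrite /ip exchange_big rmorph_sum; apply: eq_bigr => b _.
rewrite rmorph_sum; apply: eq_bigr => a _.
by rewrite !rmorphM /= conjCK (Kherm b.1 a.1) [b.2 * _]mulrC.
Qed.

Lemma ReC (z : C) : complex.Re (Num.conj z) = complex.Re z.
Proof. by case: z. Qed.
Lemma ReD (z w : C) : complex.Re (z + w) = complex.Re z + complex.Re w.
Proof. by case: z; case: w. Qed.
Lemma ReN (z : C) : complex.Re (- z) = - complex.Re z.
Proof. by case: z. Qed.
Lemma ReB (z w : C) : complex.Re (z - w) = complex.Re z - complex.Re w.
Proof. by rewrite ReD ReN. Qed.
Lemma ReRM (t : R) (z : C) : complex.Re (t%:C * z) = t * complex.Re z.
Proof. by case: z => a b /=; rewrite !mul0r subr0. Qed.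
Lemma ReR (t : R) : complex.Re (t%:C) = t.
Proof. by []. Qed.
Lemma Re_sum (I : Type) (s : seq I) (F : I -> C) :
  complex.Re (\sum_(i <- s) F i) = \sum_(i <- s) complex.Re (F i).
Proof.
elim: s => [|a s IH]; first by rewrite !big_nil.
by rewrite !big_cons ReD IH.
Qed.

Lemma ipp_ge0 p : 0 <= ip p p.
Proof. exact: Kpos. Qed.
Lemma knorm2E p : (knorm2 K p)%:C = ip p p.
Proof. by apply: RRe_real; apply: ger0_real; apply: ipp_ge0. Qed.
Lemma knorm2_ge0 p : 0 <= knorm2 K p.
Proof. by rewrite -lecR knorm2E; apply: ipp_ge0. Qed.
Lemma knorm2_ext p q : (forall y, kfun K p y = kfun K q y) -> knorm2 K p = knorm2 K q.
Proof.
move=> e; apply: complexI; rewrite !knorm2E (ip_ext p _ _ e).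
by rewrite ip_conj (ip_ext q _ _ e) -ip_conj.
Qed.
Lemma knorm2_cat p q :
  knorm2 K (p ++ q) = knorm2 K p + knorm2 K q + 2 * complex.Re (ip p q).
Proof.
by rewrite /knorm2 !kformE ip_catl !ip_catr (ip_conj p q) !ReD ReC; ring.
Qed.
Lemma knorm2_neg p : knorm2 K (neg p) = knorm2 K p.
Proof. by rewrite /knorm2 kformE ip_negl ip_negr opprK. Qed.
Lemma knorm2_kdiff p q :
  knorm2 K (kdiff p q) = knorm2 K p + knorm2 K q - 2 * complex.Re (ip p q).
Proof. by rewrite /kdiff knorm2_cat knorm2_neg ip_negr ReN; ring. Qed.
Lemma knorm2_kdiffC p q : knorm2 K (kdiff p q) = knorm2 K (kdiff q p).
Proof. by rewrite !knorm2_kdiff (ip_conj p q) ReC; ring. Qed.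
Lemma knorm2_sc (t : R) p : knorm2 K (sc t%:C p) = t ^+ 2 * knorm2 K p.
Proof.
rewrite /knorm2 kformE ip_scl ip_scr conj_Creal ?Creal_real //.
  by rewrite mulrA -rmorphM ReRM expr2.
by apply/complex_realP; exists t.
Qed.

Lemma quad_cs (A B c : R) : 0 <= A -> 0 <= B ->
  (forall t, 0 <= A - 2 * t * c + t ^+ 2 * B) -> c <= Num.sqrt A * Num.sqrt B.
Proof.
move=> A0 B0 H.
case: (lerP c 0) => [c0|c0].
  by apply: le_trans c0 _; apply: mulr_ge0; apply: sqrtr_ge0.
rewrite -sqrtrM //.
suff h : c ^+ 2 <= A * B.
  by move: h; rewrite -(ler_sqrt _ (mulr_ge0 A0 B0)) sqrtr_sqr ger0_norm // ltW.
case: (B =P 0) => [B0'|/eqP Bn0].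
  have := H ((A + 1) / (2 * c)); rewrite B0' mulr0 addr0.
  have -> : 2 * ((A + 1) / (2 * c)) * c = A + 1.
    by field; rewrite gt_eqF.
  by lra.
have Bp : 0 < B by rewrite lt_neqAle eq_sym Bn0 B0.
have := H (c / B).
have -> : A - 2 * (c / B) * c + (c / B) ^+ 2 * B = (A * B - c ^+ 2) / B by field.
by rewrite pmulr_lge0 ?invr_gt0 // subr_ge0.
Qed.

Definition nrm p := Num.sqrt (knorm2 K p).
Lemma nrm_ge0 p : 0 <= nrm p. Proof. exact: sqrtr_ge0. Qed.
Lemma nrm_sq p : nrm p ^+ 2 = knorm2 K p.
Proof. by rewrite sqr_sqrtr // knorm2_ge0. Qed.

Lemma ip_cs p q : complex.Re (ip p q) <= nrm p * nrm q.
Proof.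
apply: quad_cs; try exact: knorm2_ge0.
move=> t; have := knorm2_ge0 (kdiff p (sc t%:C q)).
rewrite knorm2_kdiff knorm2_sc ip_scr ReRM.
by have -> : knorm2 K p - 2 * t * complex.Re (ip p q) + t ^+ 2 * knorm2 K q =
  knorm2 K p + t ^+ 2 * knorm2 K q - 2 * (t * complex.Re (ip p q)) by ring.
Qed.

Lemma nrm_cat p q : nrm (p ++ q) <= nrm p + nrm q.
Proof.
rewrite /nrm -(ger0_norm (addr_ge0 (nrm_ge0 p) (nrm_ge0 q))) -sqrtr_sqr ler_sqrt;
  last by rewrite sqr_ge0.
rewrite knorm2_cat sqrrD -!/(nrm _) !nrm_sq.
have := ip_cs p q; lra.
Qed.

Lemma nrm_ext p q : (forall y, kfun K p y = kfun K q y) -> nrm p = nrm q.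
Proof. by move=> e; rewrite /nrm (knorm2_ext _ _ e). Qed.

Lemma nrm_kdiffC p q : nrm (kdiff p q) = nrm (kdiff q p).
Proof. by rewrite /nrm knorm2_kdiffC. Qed.

Lemma nrm_tri p q r : nrm (kdiff p r) <= nrm (kdiff p q) + nrm (kdiff q r).
Proof.
rewrite (@nrm_ext (kdiff p r) (kdiff p q ++ kdiff q r)); first exact: nrm_cat.
by move=> y; rewrite kfun_cat !kfun_kdiff; ring.
Qed.

Lemma nrm_tri0 p q : nrm p <= nrm (kdiff p q) + nrm q.
Proof.
rewrite (@nrm_ext p (kdiff p q ++ q)); first exact: nrm_cat.
by move=> y; rewrite kfun_cat !kfun_kdiff; ring.
Qed.

Definition nc (z : C) : R := complex.Re `|z|.
Lemma ncE (z : C) : `|z| = (nc z)%:C.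
Proof. by rewrite RRe_real // normr_real. Qed.
Lemma nc_ge0 z : 0 <= nc z.
Proof. by rewrite -(lecR 0) -ncE; apply: normr_ge0. Qed.
Lemma ncD z w : nc (z + w) <= nc z + nc w.
Proof. by rewrite -lecR rmorphD /= -!ncE ler_normD. Qed.
Lemma ncM z w : nc (z * w) = nc z * nc w.
Proof. by apply: complexI; rewrite rmorphM /= -!ncE normrM. Qed.
Lemma ncC z : nc (Num.conj z) = nc z.
Proof. by apply: complexI; rewrite -!ncE norm_conjC. Qed.
Lemma ncN z : nc (- z) = nc z.
Proof. by apply: complexI; rewrite -!ncE normrN. Qed.
Lemma nc_sq z : Num.conj z * z = (nc z ^+ 2)%:C.
Proof. by rewrite rmorphXn /= -ncE normCKC. Qed.
Lemma nc_eq0 z : nc z = 0 -> z = 0.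
Proof. by move=> h; apply/eqP; rewrite -normr_eq0 ncE h. Qed.
Lemma nc_lt (z : C) (e : R) : (`|z| < e%:C) = (nc z < e).
Proof. by rewrite ncE ltcR. Qed.
Lemma nc_sum (I : Type) (s : seq I) (F : I -> C) :
  nc (\sum_(i <- s) F i) <= \sum_(i <- s) nc (F i).
Proof.
elim: s => [|a s IH]; first by rewrite !big_nil /nc normr0.
by rewrite !big_cons; apply: le_trans (ncD _ _) _; rewrite lerD2l.
Qed.

Lemma Kxx_real x : (complex.Re (K x x))%:C = K x x.
Proof.
apply: RRe_real; apply: ger0_real.
have := Kpos [:: (x, 1)]; rewrite /kform !big_cons !big_nil /=.
by rewrite rmorph1 !mul1r !addr0.
Qed.
Lemma ReKxx_ge0 x : 0 <= complex.Re (K x x).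
Proof.
rewrite -lecR Kxx_real.
have := Kpos [:: (x, 1)]; rewrite /kform !big_cons !big_nil /=.
by rewrite rmorph1 !mul1r !addr0.
Qed.

Lemma nrm_single x c : nrm [:: (x, c)] = nc c * Num.sqrt (complex.Re (K x x)).
Proof.
rewrite /nrm /knorm2 /kform !big_cons !big_nil /= !addr0 nc_sq -Kxx_real -rmorphM /=.
by rewrite sqrtrM ?sqr_ge0 // sqrtr_sqr ger0_norm ?nc_ge0.
Qed.

Lemma kfun_bound p x : nc (kfun K p x) <= Num.sqrt (complex.Re (K x x)) * nrm p.
Proof.
set z := kfun K p x.
have h := ip_cs [:: (x, z)] p.
rewrite ip_kfun big_cons big_nil addr0 /= -/z nc_sq ReR nrm_single in h.
case: (nc z =P 0) => [->|/eqP nz0].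
  by apply: mulr_ge0; [apply: sqrtr_ge0 | apply: nrm_ge0].
have nzp : 0 < nc z by rewrite lt_neqAle eq_sym nz0 nc_ge0.
rewrite expr2 -mulrA ler_pM2l // in h.
Qed.

Local Notation xt xs i := (tnth (in_tuple xs) i).

Definition Lv (xs : seq X) (c : 'cV[C]_(size xs)) : L :=
  [seq (xt xs i, c i 0) | i <- index_enum 'I_(size xs)].

Lemma ip_Lv xs (c : 'cV[C]_(size xs)) q : ip (Lv xs c) q = \sum_i Num.conj (c i 0) * kfun K q (xt xs i).
Proof. by rewrite ip_kfun big_map. Qed.
Lemma kfun_Lv xs (c : 'cV[C]_(size xs)) y : kfun K (Lv xs c) y = \sum_i c i 0 * K y (xt xs i).
Proof. by rewrite /kfun big_map. Qed.
Lemma kfun_Lv_xt xs (c : 'cV[C]_(size xs)) j : kfun K (Lv xs c) (xt xs j) = (Kmx K xs *m c) j 0.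
Proof. by rewrite kfun_Lv !mxE; apply: eq_bigr => i _; rewrite !mxE mulrC. Qed.
Lemma ipLv_mx xs (c : 'cV[C]_(size xs)) : ip (Lv xs c) (Lv xs c) = (adjmx c *m Kmx K xs *m c) 0 0.
Proof.
rewrite ip_Lv -mulmxA !mxE; apply: eq_bigr => i _.
by rewrite kfun_Lv_xt !mxE.
Qed.
Lemma Kmx_adj xs : adjmx (Kmx K xs) = Kmx K xs.
Proof. by apply/matrixP => i j; rewrite !mxE [in RHS]Kherm. Qed.
Lemma Kmx_psd xs (c : 'cV[C]_(size xs)) : 0 <= (adjmx c *m Kmx K xs *m c) 0 0.
Proof. by rewrite -ipLv_mx; apply: ipp_ge0. Qed.

Definition Ainv xs := invmx (Kmx K xs).
Lemma Ainv_adj xs : adjmx (Ainv xs) = Ainv xs.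
Proof. by rewrite /adjmx /Ainv trmx_inv map_invmx -/(adjmx _) Kmx_adj. Qed.

Section Unit.
Variables (xs : seq X) (Ku : Kmx K xs \in unitmx).

Lemma Ainv_psd (v : 'cV[C]_(size xs)) : 0 <= (adjmx v *m Ainv xs *m v) 0 0.
Proof.
have -> : adjmx v *m Ainv xs *m v = adjmx (Ainv xs *m v) *m Kmx K xs *m (Ainv xs *m v).
  by rewrite adjmxM Ainv_adj !mulmxA -(mulmxA _ (Ainv xs) (Kmx K xs)) /Ainv mulVmx // mulmx1.
exact: Kmx_psd.
Qed.

Definition Pj (h : X -> C) : L := Lv xs (Ainv xs *m hcol h xs).

Lemma Pj_interp h j : kfun K (Pj h) (xt xs j) = h (xt xs j).
Proof. by rewrite kfun_Lv_xt mulmxA mulmxV // mul1mx mxE. Qed.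

Lemma Pj_ip h q : (forall j, kfun K q (xt xs j) = h (xt xs j)) ->
  ip (Pj h) q = ip (Pj h) (Pj h).
Proof. by move=> e; rewrite !ip_Lv; apply: eq_bigr => i _; rewrite e Pj_interp. Qed.

Lemma Pj_proj h q : (forall j, kfun K q (xt xs j) = h (xt xs j)) ->
  knorm2 K (kdiff q (Pj h)) = knorm2 K q - knorm2 K (Pj h).
Proof.
move=> e; rewrite knorm2_kdiff ip_conj (@Pj_ip h q e) ReC.
rewrite /knorm2 [kform K (Pj h)]kformE; ring.
Qed.

Lemma Pj_le h q : (forall j, kfun K q (xt xs j) = h (xt xs j)) ->
  knorm2 K (Pj h) <= knorm2 K q.
Proof. by move=> e; have := knorm2_ge0 (kdiff q (Pj h)); rewrite Pj_proj // subr_ge0. Qed.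

Lemma Pj_ext h h' : (forall j, h (xt xs j) = h' (xt xs j)) -> Pj h = Pj h'.
Proof.
move=> e; rewrite /Pj; congr (Lv xs (_ *m _)).
by apply/matrixP => i j; rewrite !mxE e.
Qed.

Lemma knorm2_Pj h : knorm2 K (Pj h) =
  complex.Re ((adjmx (hcol h xs) *m Ainv xs *m hcol h xs) 0 0).
Proof.
rewrite /knorm2 kformE ip_Lv.
have -> : adjmx (hcol h xs) *m Ainv xs = adjmx (Ainv xs *m hcol h xs).
  by rewrite adjmxM Ainv_adj.
congr complex.Re; rewrite !mxE; apply: eq_bigr => i _.
by rewrite Pj_interp !mxE.
Qed.

Lemma Qform_Pj h : Qform K h xs = knorm2 K (Pj h).
Proof.
rewrite knorm2_Pj /Qform /inv_sqrt_mx.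
set S := xget _ _.
have [[Sadj _] SS] : psd_mx S /\ S *m S = invmx (Kmx K xs).
  apply: (xgetPex 0 (P := [set S | psd_mx S /\ S *m S = invmx (Kmx K xs)])).
  apply: sqrt_psd; [exact: Ainv_adj | exact: Ainv_psd].
rewrite /l2norm2 -Re_sum; congr complex.Re.
have -> : \sum_i Num.conj ((S *m hcol h xs) i 0) * (S *m hcol h xs) i 0 =
   (adjmx (S *m hcol h xs) *m (S *m hcol h xs)) 0 0.
  by rewrite !mxE; apply: eq_bigr => i _; rewrite !mxE.
by rewrite adjmxM -Sadj !mulmxA -(mulmxA _ S S) SS.
Qed.

End Unit.

Fixpoint dedup (s : seq X) : seq X :=
  match s with
  | [::] => [::]
  | a :: s' => if `[< List.In a s' >] then dedup s' else a :: dedup s'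
  end.

Lemma dedup_In s x : List.In x (dedup s) <-> List.In x s.
Proof.
elim: s => [|a s IH] //=.
case: asboolP => H.
  rewrite IH; split; [by right | by case=> // <-].
by split; case=> [->|/IH h]; [left | right | left | right].
Qed.

Lemma dedup_NoDup s : List.NoDup (dedup s).
Proof.
elim: s => [|a s IH] /=; first by constructor.
case: asboolP => H //; constructor => // hh.
by apply: H; apply: (proj1 (dedup_In s a)).
Qed.

Lemma nthE (s : seq X) d i : nth d s i = List.nth i s d.
Proof. by elim: s i => [|a s IH] [|i] //=. Qed.
Lemma sizeE (s : seq X) : size s = length s.
Proof. by elim: s => //= a s ->. Qed.

Lemma xt_In (xs : seq X) (j : 'I_(size xs)) : List.In (xt xs j) xs.
Proof.
rewrite (tnth_nth (xt xs j)) nthE /=; apply: List.nth_In.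
by apply/ssrnat.ltP; rewrite -sizeE.
Qed.

Lemma In_xt (xs : seq X) x : List.In x xs -> exists j : 'I_(size xs), xt xs j = x.
Proof.
move=> /(List.In_nth _ _ x) [k [/ssrnat.ltP hk e]].
rewrite -sizeE in hk; exists (Ordinal hk).
by rewrite (tnth_nth x) nthE.
Qed.

Lemma xt_inj (xs : seq X) : List.NoDup xs ->
  forall i j : 'I_(size xs), xt xs i = xt xs j -> i = j.
Proof.
move=> H i j; have [d _] : exists d : X, True by exists (xt xs i).
rewrite !(tnth_nth d) !nthE /= => e; apply: val_inj => /=.
apply: (proj1 (List.NoDup_nth xs d) H) => //;
  by apply/ssrnat.ltP; rewrite -sizeE.
Qed.

Lemma sum_le_In (T : Type) (g : seq T) (F G : T -> R) :
  (forall a, List.In a g -> F a <= G a) -> \sum_(a <- g) F a <= \sum_(a <- g) G a.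
Proof.
elim: g => [|a g IH] H; first by rewrite !big_nil.
rewrite !big_cons; apply: lerD; first by apply: H; left.
by apply: IH => b hb; apply: H; right.
Qed.

Lemma sum_eq_In (T : Type) (g : seq T) (F G : T -> C) :
  (forall a, List.In a g -> F a = G a) -> \sum_(a <- g) F a = \sum_(a <- g) G a.
Proof.
elim: g => [|a g IH] H; first by rewrite !big_nil.
rewrite !big_cons H; last by left.
by rewrite IH // => b hb; apply: H; right.
Qed.

Lemma In_fst (g : L) a : List.In a g -> List.In a.1 [seq b.1 | b <- g].
Proof.
elim: g => [|b g IH] //= [->|h]; [by left | by right; apply: IH].
Qed.

Lemma Re_le_nc z : `|complex.Re z| <= nc z.
Proof. by rewrite -lecR -ncE; apply: normc_ge_Re. Qed.

Lemma nrm0_ip p q : knorm2 K p = 0 -> ip p q = 0.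
Proof.
move=> p0.
have cs q' : complex.Re (ip p q') <= 0.
  by have := ip_cs p q'; rewrite /nrm p0 sqrtr0 mul0r.
have h1 := cs q; have h2 := cs (neg q); have h3 := cs (sc 'i%C q);
have h4 := cs (sc (- 'i%C) q).
rewrite ip_negr in h2; rewrite ip_scr in h3; rewrite ip_scr in h4.
move: (ip p q) h1 h2 h3 h4 => [a b] /= h1 h2 h3 h4.
have a0 : a = 0 by lra.
have b0 : b = 0 by lra.
by rewrite a0 b0.
Qed.

Definition ptw (u : nat -> L) (h : X -> C) := forall (x : X) (e : R), 0 < e ->
  exists N : nat, forall n : nat, (N <= n)%N -> `|kfun K (u n) x - h x| < e%:C.

Lemma unifN u h : ptw u h -> forall (s : seq X) e, 0 < e -> exists N, forall n,
  (N <= n)%N -> forall x, List.In x s -> nc (kfun K (u n) x - h x) < e.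
Proof.
move=> H s e e0; elim: s => [|a s [Ns IH]]; first by exists 0%N.
have [Na Ha] := H a e e0.
exists (maxn Na Ns) => n hn x /= [<-|hx].
  by rewrite -nc_lt; apply: Ha; apply: leq_trans hn; apply: leq_maxl.
by apply: IH => //; apply: leq_trans hn; apply: leq_maxr.
Qed.

Lemma lin_lim u h : ptw u h -> forall (g : L) e, 0 < e -> exists N, forall n,
  (N <= n)%N -> nc (ip g (u n) - \sum_(a <- g) Num.conj a.2 * h a.1) < e.
Proof.
move=> H g e e0.
set B := \sum_(a <- g) nc a.2.
have B0 : 0 <= B by apply: sumr_ge0 => a _; apply: nc_ge0.
have d0 : 0 < e / (B + 1) by apply: divr_gt0 => //; lra.
have [N HN] := @unifN u h H [seq b.1 | b <- g] _ d0.
exists N => n hn.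
have -> : ip g (u n) - \sum_(a <- g) Num.conj a.2 * h a.1 =
   \sum_(a <- g) Num.conj a.2 * (kfun K (u n) a.1 - h a.1).
  by rewrite ip_kfun -sumrB; apply: eq_bigr => a _; rewrite mulrBr.
apply: le_lt_trans (nc_sum _ _ _) _.
apply: (@le_lt_trans _ _ (B * (e / (B + 1)))).
  rewrite /B mulr_suml; apply: sum_le_In => a ha.
  rewrite ncM ncC; apply: ler_wpM2l; first exact: nc_ge0.
  by apply: ltW; apply: HN => //; apply: In_fst.
rewrite mulrA ltr_pdivrMr; last lra.
by rewrite mulrDr mulr1 mulrC ltrDl.
Qed.
Lemma Lv_In (xs : seq X) (c : 'cV[C]_(size xs)) a : List.In a (Lv xs c) -> List.In a.1 xs.
Proof.
rewrite /Lv; move: (index_enum 'I_(size xs)) => l.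
elim: l => [|i l IH] //= [<-|h]; last exact: IH.
exact: xt_In.
Qed.

Section Delta.
Hypothesis Hdelta : forall x, inH K (delta x).

Lemma Kunit (xs : seq X) : List.NoDup xs -> Kmx K xs \in unitmx.
Proof.
move=> nd.
rewrite -unitmx_tr -row_free_unit -kermx_eq0; apply/rowV0P => v /sub_kermxP vK.
set c := v^T.
have Kc : Kmx K xs *m c = 0.
  by rewrite -(trmxK (Kmx K xs)) -trmx_mul vK trmx0.
suff c0 : c = 0 by rewrite -(trmxK v) -/c c0 trmx0.
set p := Lv xs c.
have kp j : kfun K p (xt xs j) = 0 by rewrite kfun_Lv_xt Kc mxE.
have p0 : knorm2 K p = 0.
  by rewrite /knorm2 kformE ip_Lv big1 // => i _; rewrite kp mulr0.
apply/matrixP => k j; rewrite ord1 [RHS]mxE.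
have [w [_ Hw]] := Hdelta (xt xs k).
have val : \sum_(a <- p) Num.conj a.2 * delta (xt xs k) a.1 = Num.conj (c k 0).
  rewrite big_map (bigD1 k) //= big1 => [|i ik].
    by rewrite /delta; case: pselect => [e|ne]; [rewrite mulr1 addr0 | case: ne].
  rewrite /delta; case: pselect => [e|ne]; last by rewrite mulr0.
  by move/eqP: ik; case; apply: xt_inj.
have ncz : nc (Num.conj (c k 0)) = 0.
  apply/eqP; rewrite eq_le nc_ge0 andbT; apply/ler_addgt0Pr => e e0.
  rewrite add0r; apply: ltW.
  have [N HN] := @lin_lim w (delta (xt xs k)) Hw p e e0.
  have := HN N (leqnn N); rewrite val (nrm0_ip p (w N) p0).
  by rewrite add0r ncN.
by apply/eqP; rewrite -conjC_eq0; apply/eqP; apply: nc_eq0.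
Qed.

Lemma Pj_interpI (xs : seq X) h : List.NoDup xs ->
  forall x, List.In x xs -> kfun K (Pj xs h) x = h x.
Proof. by move=> nd x /In_xt [j <-]; apply: Pj_interp; apply: Kunit. Qed.

Lemma Pj_projI (xs : seq X) h q : List.NoDup xs ->
  (forall x, List.In x xs -> kfun K q x = h x) ->
  knorm2 K (kdiff q (Pj xs h)) = knorm2 K q - knorm2 K (Pj xs h).
Proof. by move=> nd e; apply: Pj_proj; [apply: Kunit | move=> j; apply: e; apply: xt_In]. Qed.

Lemma Pj_leI (xs : seq X) h q : List.NoDup xs ->
  (forall x, List.In x xs -> kfun K q x = h x) ->
  knorm2 K (Pj xs h) <= knorm2 K q.
Proof. by move=> nd e; apply: Pj_le; [apply: Kunit | move=> j; apply: e; apply: xt_In]. Qed.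

Lemma QformI (xs : seq X) h : List.NoDup xs -> Qform K h xs = knorm2 K (Pj xs h).
Proof. by move=> nd; apply: Qform_Pj; apply: Kunit. Qed.

Lemma Qmono (xs ys : seq X) h : List.NoDup xs -> List.NoDup ys ->
  (forall x, List.In x xs -> List.In x ys) -> knorm2 K (Pj xs h) <= knorm2 K (Pj ys h).
Proof.
move=> nx ny sub; apply: Pj_leI => // x hx.
by apply: Pj_interpI => //; apply: sub.
Qed.

Lemma Pj_val (xs : seq X) h : List.NoDup xs ->
  \sum_(a <- Pj xs h) Num.conj a.2 * h a.1 = ip (Pj xs h) (Pj xs h).
Proof.
move=> nd; rewrite ip_kfun; apply: sum_eq_In => a ha.
by rewrite Pj_interpI //; apply: (@Lv_In xs _ a ha).
Qed.

Lemma tol_small (e : R) : 0 < e -> exists N : nat, (N.+1%:R)^-1 < e.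
Proof.
move=> e0; have e' : 0 <= e^-1 by rewrite invr_ge0 ltW.
have h := archi_boundP e'.
exists (Num.Def.archi_bound e^-1).
set N := Num.Def.archi_bound e^-1 in h *.
have h2 : e^-1 < N.+1%:R by apply: lt_trans h _; rewrite ltr_nat.
rewrite -(ltr_pM2l e0) mulfV ?gt_eqF // in h2.
by rewrite -div1r ltr_pdivrMr ?ltr0Sn // mulrC.
Qed.

Lemma nrm_lt p e : 0 < e -> knorm2 K p < e ^+ 2 -> nrm p < e.
Proof.
move=> e0 h; rewrite /nrm -(@ger0_norm _ e) ?ltW // -sqrtr_sqr ltr_sqrt //.
by rewrite exprn_gt0.
Qed.

Lemma lower_id p q : 2 * complex.Re (ip q p) - knorm2 K q <= knorm2 K p.
Proof.
have := knorm2_ge0 (kdiff p q); rewrite knorm2_kdiff ip_conj ReC.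
lra.
Qed.

Lemma Re_diff z w : complex.Re z - complex.Re w <= nc (z - w).
Proof.
rewrite -ReB; apply: le_trans (Re_le_nc _); exact: ler_norm.
Qed.

Lemma approx_lower u h (xs : seq X) : ptw u h -> List.NoDup xs ->
  forall e, 0 < e -> exists N, forall n, (N <= n)%N ->
  knorm2 K (Pj xs h) - e < knorm2 K (u n).
Proof.
move=> H nd e e0.
have e2 : 0 < e / 2 by rewrite divr_gt0.
have [N HN] := @lin_lim u h H (Pj xs h) _ e2.
exists N => n hn.
have h1 := HN n hn; rewrite Pj_val // in h1.
have h2 := Re_diff (ip (Pj xs h) (Pj xs h)) (ip (Pj xs h) (u n)).
have h3 : nc (ip (Pj xs h) (Pj xs h) - ip (Pj xs h) (u n)) < e / 2.
  by rewrite -ncN opprB.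
have h4 := lower_id (u n) (Pj xs h).
rewrite /knorm2 kformE in h4 *.
lra.
Qed.

Lemma approx_bound u h : approximates K h u ->
  exists M, forall xs, List.NoDup xs -> knorm2 K (Pj xs h) <= M.
Proof.
case=> Hc Hp.
have [N HN] := Hc 1 ltr01.
exists ((nrm (u N) + 1) ^+ 2 + 1) => xs nd.
have [N1 HN1] := @approx_lower u h xs Hp nd 1 ltr01.
set n := maxn N N1.
have h1 := HN1 n (leq_maxr _ _).
have h2 : nrm (kdiff (u n) (u N)) < 1.
  by apply: nrm_lt => //; rewrite expr1n; apply: HN => //; apply: leq_maxl.
have h3 := nrm_tri0 (u n) (u N).
have h4 := nrm_ge0 (u n).
rewrite -(nrm_sq (u n)) in h1.
have h5 : 0 <= nrm (u N) + 1 - nrm (u n) by lra.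
have h6 : 0 <= nrm (u N) + 1 + nrm (u n) by have := nrm_ge0 (u N); lra.
have h7 := mulr_ge0 h5 h6.
have -> : (nrm (u N) + 1) ^+ 2 = nrm (u n) ^+ 2 + (nrm (u N) + 1 - nrm (u n)) * (nrm (u N) + 1 + nrm (u n)) by ring.
lra.
Qed.

Lemma approx_upper u h S : approximates K h u -> 0 <= S ->
  (forall xs, List.NoDup xs -> knorm2 K (Pj xs h) <= S) ->
  forall d, 0 < d -> exists N, forall m, (N <= m)%N -> nrm (u m) <= Num.sqrt S + d.
Proof.
case=> Hc Hp S0 HS d d0.
have [N HN] := Hc (d ^+ 2) (exprn_gt0 2 d0).
exists N => m hm.
set ys := dedup [seq a.1 | a <- u m].
have nys : List.NoDup ys by apply: dedup_NoDup.
set P := Pj ys h.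
set t := nrm (u m).
have t0 : 0 <= t by apply: nrm_ge0.
have sS : 0 <= Num.sqrt S by apply: sqrtr_ge0.
have val : \sum_(a <- u m) Num.conj a.2 * h a.1 = ip (u m) P.
  rewrite ip_kfun; apply: sum_eq_In => a ha.
  rewrite Pj_interpI //; apply/dedup_In; exact: In_fst.
have nP : nrm P <= Num.sqrt S by rewrite ler_sqrt //; apply: HS.
have key : t ^+ 2 <= t * (d + Num.sqrt S).
  apply/ler_addgt0Pr => eta eta0.
  have [N1 HN1] := @lin_lim u h Hp (u m) _ eta0.
  set n := maxn N N1.
  have h1 := HN1 n (leq_maxr _ _); rewrite val in h1.
  have h2 := Re_diff (ip (u m) (u n)) (ip (u m) P).
  have h3 := ip_cs (u m) P.
  have h4 := ip_cs (u m) (kdiff (u m) (u n)).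
  have h5 : nrm (kdiff (u m) (u n)) < d.
    by apply: nrm_lt => //; apply: HN => //; apply: leq_maxl.
  rewrite /kdiff ip_catr ip_negr ReD ReN -/(kdiff _ _) in h4.
  have h6 : t ^+ 2 = complex.Re (ip (u m) (u m)) by rewrite nrm_sq.
  have h7 := nrm_ge0 (kdiff (u m) (u n)).
  have p1 := ler_wpM2l t0 (ltW h5).
  have p2 := ler_wpM2l t0 nP.
  rewrite -/t in h3 h4.
  lra.
nra.
Qed.

Lemma sq_lt (x y : R) : 0 <= x -> 0 < y -> x ^+ 2 < y ^+ 2 -> x < y.
Proof. by move=> x0 y0 h; nra. Qed.

Lemma norm_conv u h S : approximates K h u -> 0 <= S ->
  (forall xs, List.NoDup xs -> knorm2 K (Pj xs h) <= S) ->
  (forall e, 0 < e -> exists xs, List.NoDup xs /\ S - e < knorm2 K (Pj xs h)) ->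
  forall e, 0 < e -> exists N, forall n, (N <= n)%N -> `|knorm2 K (u n) - S| < e.
Proof.
move=> Hu S0 HS Had e e0.
have e2 : 0 < e / 2 by rewrite divr_gt0.
have [xs [nd hxs]] := Had _ e2.
have [N1 HN1] := @approx_lower u h xs Hu.2 nd _ e2.
set s := Num.sqrt S.
have s0 : 0 <= s by apply: sqrtr_ge0.
set D := 2 * s + e + 1.
have D0 : 0 < D by rewrite /D; lra.
set d := e / D.
have d0 : 0 < d by rewrite divr_gt0.
have [N2 HN2] := @approx_upper u h S Hu S0 HS d d0.
exists (maxn N1 N2) => n hn.
have l := HN1 n (leq_trans (leq_maxl _ _) hn).
have up := HN2 n (leq_trans (leq_maxr _ _) hn).
have ss : s ^+ 2 = S by apply: sqr_sqrtr.
have dD : d * D = e by rewrite /d divfK // gt_eqF.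
have d1 : d < 1 by rewrite /d ltr_pdivrMr // mul1r /D; lra.
have p1 : d * (2 * s + d) < d * D by rewrite ltr_pM2l // /D; lra.
have t0 := nrm_ge0 (u n).
have q1 : 0 <= s + d - nrm (u n) by rewrite -/s in up; lra.
have q2 : 0 <= s + d + nrm (u n) by lra.
have q3 := mulr_ge0 q1 q2.
rewrite -nrm_sq ltr_norml; apply/andP; split.
  by rewrite nrm_sq; lra.
have -> : nrm (u n) ^+ 2 = (s + d) ^+ 2 - (s + d - nrm (u n)) * (s + d + nrm (u n)) by ring.
have -> : (s + d) ^+ 2 = s ^+ 2 + d * (2 * s + d) by ring.
rewrite ss; lra.
Qed.

Fixpoint accum (f : nat -> seq X) (k : nat) : seq X :=
  match k with
  | 0 => dedup (f 0%N)
  | k'.+1 => dedup (f k'.+1 ++ accum f k')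
  end.

Lemma In_catl (s1 s2 : seq X) x : List.In x s1 -> List.In x (s1 ++ s2).
Proof. by elim: s1 => [|a s IH] //= [->|h]; [left | right; apply: IH]. Qed.
Lemma In_catr (s1 s2 : seq X) x : List.In x s2 -> List.In x (s1 ++ s2).
Proof. by elim: s1 => [|a s IH] //= h; right; apply: IH. Qed.

Lemma accum_NoDup f k : List.NoDup (accum f k).
Proof. by case: k => [|k] /=; apply: dedup_NoDup. Qed.
Lemma accum_f f k x : List.In x (f k) -> List.In x (accum f k).
Proof. by case: k => [|k] /= h; apply/dedup_In => //; apply: In_catl. Qed.
Lemma accum_mono f k l x : (k <= l)%N -> List.In x (accum f k) -> List.In x (accum f l).
Proof.
elim: l => [|l IH]; first by rewrite leqn0 => /eqP ->.
rewrite leq_eqVlt ltnS => /orP [/eqP -> //|kl] hx /=.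
by apply/dedup_In; apply: In_catr; apply: IH.
Qed.

Lemma construct h S :
  (forall xs, List.NoDup xs -> knorm2 K (Pj xs h) <= S) ->
  (forall e, 0 < e -> exists xs, List.NoDup xs /\ S - e < knorm2 K (Pj xs h)) ->
  inH K h.
Proof.
move=> HS Had.
have tp k : 0 < (k.+1%:R)^-1 :> R by rewrite invr_gt0 ltr0Sn.
have [f Hf] := @choice nat (seq X) (fun k xs => List.NoDup xs /\
    S - (k.+1%:R)^-1 < knorm2 K (Pj xs h)) (fun k => Had _ (tp k)).
pose u := fun k => Pj (accum f k) h.
have QS k : knorm2 K (u k) <= S by apply: HS; apply: accum_NoDup.
have Qlow k : S - (k.+1%:R)^-1 < knorm2 K (u k).
  apply: lt_le_trans (proj2 (Hf k)) _.
  by apply: Qmono; [exact: (proj1 (Hf k)) | exact: accum_NoDup | apply: accum_f].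
have Qmon k l : (k <= l)%N -> knorm2 K (u k) <= knorm2 K (u l).
  move=> kl; apply: Qmono; try exact: accum_NoDup.
  by move=> x; apply: accum_mono.
have interp k l x : (k <= l)%N -> List.In x (accum f k) -> kfun K (u l) x = h x.
  move=> kl hx; apply: Pj_interpI; first exact: accum_NoDup.
  exact: accum_mono hx.
have dist k l : (k <= l)%N ->
    knorm2 K (kdiff (u l) (u k)) = knorm2 K (u l) - knorm2 K (u k).
  move=> kl; apply: Pj_projI; first exact: accum_NoDup.
  by move=> x hx; apply: interp hx.
exists u; split.
  move=> e e0; have [N HN] := tol_small _ e0.
  exists N => m n hm hn.
  wlog nm : m n hm hn / (n <= m)%N.
    move=> H; case: (leqP n m) => [nm|/ltnW mn]; first exact: H.
    by rewrite knorm2_kdiffC; apply: H.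
  rewrite dist //.
  have h1 := Qlow N; have h2 := QS m; have h3 := Qmon N n hn.
  apply: (@le_lt_trans _ _ (S - knorm2 K (u N))); first lra.
  apply: lt_trans HN; move: h1; set t := (N.+1%:R)^-1; lra.
move=> x e e0.
set a := complex.Re (K x x).
have a0 : 0 <= a := ReKxx_ge0 x.
have ea : 0 < e ^+ 2 / (a + 1) by rewrite divr_gt0 ?exprn_gt0 //; lra.
have [N HN] := tol_small _ ea.
exists N => n hn.
set G := dedup (x :: accum f n).
have nG : List.NoDup G by apply: dedup_NoDup.
have sub y : List.In y (accum f n) -> List.In y G by move=> hy; apply/dedup_In; right.
have xG : List.In x G by apply/dedup_In; left.
set v := Pj G h.
have dvn : knorm2 K (kdiff v (u n)) = knorm2 K v - knorm2 K (u n).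
  apply: Pj_projI; first exact: accum_NoDup.
  by move=> y hy; apply: Pj_interpI => //; apply: sub.
have vS : knorm2 K v <= S by apply: HS.
have r2 : nrm (kdiff v (u n)) ^+ 2 < (N.+1%:R)^-1.
  rewrite nrm_sq dvn; have h1 := Qlow N; have h2 := Qmon N n hn.
  move: h1; set t := (N.+1%:R)^-1; lra.
have eq : kfun K (u n) x - h x = - kfun K (kdiff v (u n)) x.
  by rewrite kfun_kdiff (@Pj_interpI G h nG x xG); ring.
rewrite nc_lt eq ncN.
apply: le_lt_trans (kfun_bound _ _) _.
apply: sq_lt; first by apply: mulr_ge0; [apply: sqrtr_ge0 | apply: nrm_ge0].
  done.
rewrite exprMn sqr_sqrtr //.
rewrite ltr_pdivlMr in HN; last lra.
have t0 : 0 <= (N.+1%:R)^-1 :> R by rewrite invr_ge0 ler0n.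
have h1 := ler_wpM2l a0 (ltW r2).
rewrite -/a; move: HN t0 h1; rewrite -/(_ / _); set t := (N.+1%:R)^-1.
move=> HN t0 h1; nra.
Qed.
Lemma main_res h :
  (inH K h <-> exists M : R, forall xs : seq X, List.NoDup xs -> Qform K h xs <= M)
  /\
  (inH K h -> rkhs_norm2 K h
     (sup [set Qform K h xs | xs in [set xs | List.NoDup xs]]%classic)).
Proof.
set E := [set Qform K h xs | xs in [set xs | List.NoDup xs]]%classic.
have EQ xs : List.NoDup xs -> E (knorm2 K (Pj xs h)).
  by move=> nd; exists xs => //; apply: QformI.
have supf : forall M, (forall xs, List.NoDup xs -> knorm2 K (Pj xs h) <= M) ->
  [/\ 0 <= sup E, (forall xs, List.NoDup xs -> knorm2 K (Pj xs h) <= sup E) &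
      (forall e, 0 < e -> exists xs, List.NoDup xs /\ sup E - e < knorm2 K (Pj xs h))].
  move=> M HM.
  have hs : has_sup E.
    split; first by exists (knorm2 K (Pj [::] h)); apply: EQ; constructor.
    exists M => y [xs nd <-]; rewrite QformI //; exact: HM.
  have ub xs : List.NoDup xs -> knorm2 K (Pj xs h) <= sup E.
    by move=> nd; apply: sup_upper_bound => //; apply: EQ.
  split => //.
    apply: le_trans (ub [::] (List.NoDup_nil _)); exact: knorm2_ge0.
  move=> e e0; have [y [xs nd <-] hy] := sup_adherent e0 hs.
  by exists xs; split => //; rewrite -QformI.
split; first split.
- case=> u Hu; have [M HM] := @approx_bound u h Hu.
  by exists M => xs nd; rewrite QformI //; apply: HM.
- case=> M HM.
  have HM' : forall xs, List.NoDup xs -> knorm2 K (Pj xs h) <= M.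
    by move=> xs nd; rewrite -QformI //; apply: HM.
  have [_ h1 h2] := supf M HM'.
  exact: (@construct h (sup E) h1 h2).
- case=> u0 Hu0 u Hu.
  have [M HM] := @approx_bound u h Hu.
  have [h0 h1 h2] := supf M HM.
  exact: (@norm_conv u h (sup E) Hu h0 h1 h2).
Qed.




End Delta.



End H0.

Local Open Scope classical_set_scope.

Theorem corollary8p5 (R : realType) (X : Type) (K : X -> X -> R[i]) :
  pos_def K ->
  (forall x : X, inH K (delta x)) ->
  forall h : X -> R[i],
    (inH K h <-> exists M : R, forall xs : seq X, List.NoDup xs -> Qform K h xs <= M)
    /\
    (inH K h -> rkhs_norm2 K h (sup [set Qform K h xs | xs in [set xs | List.NoDup xs]])).
Proof. by move=> Kpos Hd h; apply: main_res. Qed.
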